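(* Let $(\mathfrak{A},\varphi,\tau)$ be a $*$-dynamical system, and let $A\in\mathfrak{A}$ and $\varepsilon>0$. Then the set $$E=\left\{k\in\mathbb{N}:\left|\varphi\left(A^*\tau^k(A)\right)\right|>\left|\varphi(A)\right|^2-\varepsilon\right\}$$ is relatively dense in $\mathbb{N}=\{1,2,3,\dots\}$.
   Context: All algebras are over $\mathbb{C}$. A unital $*$-algebra is a complex algebra with an involution $*$ and a unit $1$. A state on a unital $*$-algebra $\mathfrak{A}$ is a linear functional $\varphi$ with $\varphi(A^*A)\ge0$ for all $A$ and $\varphi(1)=1$. A $*$-dynamical system is a triple $(\mathfrak{A},\varphi,\tau)$ where $\mathfrak{A}$ is a unital $*$-algebra, $\varphi$ a state on $\mathfrak{A}$, and $\tau:\mathfrak{A}\to\mathfrak{A}$ a linear map (not necessarily multiplicative) with $\tau(1)=1$ and $\varphi(\tau(A)^*\tau(A))\le\varphi(A^*A)$ for all $A\in\mathfrak{A}$. A set $E\subseteq\mathbb{N}$ is relatively dense in $\mathbb{N}$ if there exists $n\in\mathbb{N}$ such that $E\cap\{j,\dots,j+n-1\}\neq\emptyset$ for every $j\in\mathbb{N}$. *)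

(* Defs.v *)
From HB Require Import structures.
From mathcomp Require Import all_boot all_order all_algebra.
From mathcomp Require Import complex reals.
Set Implicit Arguments. Unset Strict Implicit. Unset Printing Implicit Defensive.
Import Order.TTheory GRing.Theory Num.Theory.
Local Open Scope ring_scope.

Definition is_involution (R : realType) (A : algType R[i]) (star : A -> A) : Prop :=
  [/\ forall x y : A, star (x + y) = star x + star y,
      forall (a : R[i]) (x : A), star (a *: x) = (Num.conj a) *: star x,
      forall x y : A, star (x * y) = star y * star x
    & forall x : A, star (star x) = x].

Definition is_state (R : realType) (A : algType R[i]) (star : A -> A)
  (phi : A -> R[i]) : Prop :=
  [/\ forall (a : R[i]) (x y : A), phi (a *: x + y) = a * phi x + phi y,
      forall x : A, 0 <= phi (star x * x)
    & phi 1 = 1].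

Definition is_dynamics (R : realType) (A : algType R[i]) (star : A -> A)
  (phi : A -> R[i]) (tau : A -> A) : Prop :=
  [/\ forall (a : R[i]) (x y : A), tau (a *: x + y) = a *: tau x + tau y,
      tau 1 = 1
    & forall x : A, phi (star (tau x) * tau x) <= phi (star x * x)].

Definition star_dynamical_system (R : realType) (A : algType R[i]) (star : A -> A)
  (phi : A -> R[i]) (tau : A -> A) : Prop :=
  [/\ is_involution star, is_state star phi & is_dynamics star phi tau].

Definition rel_dense_N (E : nat -> Prop) : Prop :=
  exists n : nat, (0 < n)%N /\
    forall j : nat, (0 < j)%N -> exists k : nat, (j <= k < j + n)%N /\ E k.

(* Main.v *)
Require Import Defs.
From HB Require Import structures.
From mathcomp Require Import all_boot all_order all_algebra.
From mathcomp Require Import complex reals.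
From mathcomp Require Import classical_sets ring lra.
Import Order.TTheory GRing.Theory Num.Theory.
Local Open Scope ring_scope.

Set Implicit Arguments. Unset Strict Implicit.

Definition sc {R : realType} {V : lmodType R[i]} (s : R) (u : V) : V :=
  ((s%:C)%C : R[i]) *: u.

Record form (R : realType) (V : lmodType R[i]) (r : V -> V -> R) : Prop := {
  rD : forall u v w, r (u + v) w = r u w + r v w;
  rZ : forall s u w, r (sc s u) w = s * r u w;
  rC : forall u v, r u v = r v u;
  rN : forall u, 0 <= r u u }.

Definition contr (R : realType) (V : lmodType R[i]) (r : V -> V -> R) (T : V -> V) :=
  [/\ forall u v, T (u + v) = T u + T v,
      forall s u, T (sc s u) = sc s (T u)
    & forall u, r (T u) (T u) <= r u u].

Lemma quad (R : realType) (a b d : R) : 0 <= b ->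
  (forall t, 0 <= a - 2 * t * d + t ^+ 2 * b) -> d ^+ 2 <= a * b.
Proof.
move=> b0 H; have a0 : 0 <= a by have := H 0; lra.
case: (boolP (b == 0)) => [/eqP b00|bn0].
  subst b; case: (boolP (d == 0)) => [/eqP ->|dn0]; first by rewrite expr0n /= mulr0.
  have := H ((a + 1) / (2 * d)).
  have -> : 2 * ((a + 1) / (2 * d)) * d = a + 1.
    by field.
  rewrite mulr0 addr0; lra.
have bp : 0 < b by rewrite lt_def bn0.
set q := d / b; have hd : d = q * b by rewrite /q divfK.
clearbody q; subst d; have Hq := H q; have := mulr_ge0 (ltW bp) Hq; nra.
Qed.

Section Form.
Variables (R : realType) (V : lmodType R[i]) (r : V -> V -> R).
Hypothesis F : form r.

Lemma r0l w : r 0 w = 0.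
Proof. have := rD F 0 0 w; rewrite addr0; lra. Qed.
Lemma rNl u w : r (- u) w = - r u w.
Proof. have := rD F u (-u) w; rewrite subrr r0l; lra. Qed.
Lemma rBl u v w : r (u - v) w = r u w - r v w.
Proof. by rewrite rD // rNl. Qed.
Lemma rDr u v w : r w (u + v) = r w u + r w v.
Proof. by rewrite rC // rD // !(rC F w). Qed.
Lemma rBr u v w : r w (u - v) = r w u - r w v.
Proof. by rewrite rC // rBl // !(rC F w). Qed.
Lemma rZr s u w : r w (sc s u) = s * r w u.
Proof. by rewrite rC // rZ // (rC F w). Qed.
Lemma r0r w : r w 0 = 0.
Proof. by rewrite rC // r0l. Qed.

Lemma expand u v t : r (u - sc t v) (u - sc t v) = r u u - 2 * t * r u v + t ^+ 2 * r v v.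
Proof.
rewrite rBl rBr rBr rZ // rZ // rZr rZr (rC F v u); ring.
Qed.

Lemma sum_rl I (s : seq I) (P : pred I) (f : I -> V) w :
  r (\sum_(i <- s | P i) f i) w = \sum_(i <- s | P i) r (f i) w.
Proof.
elim/big_rec2: _ => [|i y1 y2 _ <-]; first exact: r0l.
by rewrite rD.
Qed.
Lemma sum_rr I (s : seq I) (P : pred I) (f : I -> V) w :
  r w (\sum_(i <- s | P i) f i) = \sum_(i <- s | P i) r w (f i).
Proof.
rewrite rC // sum_rl; apply: eq_bigr => i _; exact: rC.
Qed.

Lemma contr0 T : contr r T -> T 0 = 0.
Proof.
case=> TD _ _; have h := TD 0 0; rewrite addr0 in h.
by apply: (addrI (T 0)); rewrite addr0 -h.
Qed.
Lemma contrN T : contr r T -> forall u, T (- u) = - T u.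
Proof.
move=> c u; have := c; case=> TD _ _; have := TD u (-u).
rewrite subrr contr0 // => /esym/eqP; rewrite addr_eq0 => /eqP ->; by rewrite opprK.
Qed.
Lemma contrB T : contr r T -> forall u v, T (u - v) = T u - T v.
Proof. move=> c u v; have := c; case=> TD _ _; by rewrite TD contrN. Qed.

Lemma contr_iter T : contr r T -> forall j, contr r (iter j T).
Proof.
move=> c; have := c; case=> TD TZ TN; elim=> [|j [ID IZ IN]]; first by split.
split=> [u v|s u|u] /=; first by rewrite ID TD.
  by rewrite IZ TZ.
exact: le_trans (TN _) (IN _).
Qed.

Lemma contr_sum T : contr r T -> forall I (s : seq I) (P : pred I) (f : I -> V),
  T (\sum_(i <- s | P i) f i) = \sum_(i <- s | P i) T (f i).
Proof.
move=> c I s P f; elim/big_rec2: _ => [|i y1 y2 _ <-]; first exact: contr0.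
by case: c => TD _ _; rewrite TD.
Qed.

Lemma C1 T : contr r T -> forall u v,
  (r u v - r (T u) (T v)) ^+ 2 <= (r u u - r (T u) (T u)) * (r v v - r (T v) (T v)).
Proof.
move=> c u v; have := c; case=> TD TZ TN.
apply: quad; first by have := TN v; lra.
move=> t; have := TN (u - sc t v); rewrite contrB // TZ !expand; lra.
Qed.

Lemma CS u v : r u v ^+ 2 <= r u u * r v v.
Proof.
have c0 : contr r (fun _ => 0).
  by split=> [u' v'|s u'|u']; rewrite ?addr0 ?/sc ?scaler0 ?r0l ?rN.
by have := C1 c0 u v; rewrite r0l !subr0.
Qed.

End Form.

Lemma widen (Z : zmodType) (f : nat -> Z) n n' : (n <= n')%N ->
  (forall i, (n <= i)%N -> f i = 0) -> \sum_(i < n') f i = \sum_(i < n) f i.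
Proof.
move=> le h; elim: n' le => [|n' IH]; first by rewrite leqn0 => /eqP ->.
rewrite leq_eqVlt => /orP [/eqP <- //| lt].
by rewrite big_ord_recr /= IH // h // addr0.
Qed.

Lemma tele (R : realType) (g : nat -> R) Q : (forall j, - Q <= g j <= Q) ->
  forall i n, \sum_(k < n) g (k + i)%N <= \sum_(k < n) g k + 2 * i%:R * Q.
Proof.
move=> hg; elim=> [|i IH] n.
  rewrite mulr0 mul0r addr0; under eq_bigr => k _ do rewrite addn0; by [].
have step : \sum_(k < n) g (k + i.+1)%N = \sum_(k < n) g (k + i)%N + g (n + i)%N - g i.
  have h1 : \sum_(k < n.+1) g (k + i)%N = g i + \sum_(k < n) g (k.+1 + i)%N.
    by rewrite big_ord_recl /= add0n; congr (_ + _); apply: eq_bigr => k _; rewrite lift0.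
  have h2 : \sum_(k < n.+1) g (k + i)%N = \sum_(k < n) g (k + i)%N + g (n + i)%N.
    by rewrite big_ord_recr.
  have -> : \sum_(k < n) g (k + i.+1)%N = \sum_(k < n) g (k.+1 + i)%N.
    by apply: eq_bigr => k _; rewrite addnS addSn.
  lra.
rewrite step; have := IH n; have := hg (n + i)%N; have := hg i.
rewrite -natr1; lra.
Qed.

Lemma abs_sq (R : realType) (a b : R) : 0 <= b -> a ^+ 2 <= b ^+ 2 -> - b <= a /\ a <= b.
Proof. move=> b0 h; split; nra. Qed.

Section Main.
Variables (R : realType) (V : lmodType R[i]) (r : V -> V -> R).
Hypothesis F : form r.
Variable T : V -> V.
Hypothesis c : contr r T.
Variables (A e : V).
Hypothesis Te : T e = e.
Hypothesis ree : r e e = r e A.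

Local Notation X i := (iter i T A).
Local Notation N u := (r u u).

Lemma sc1 (u : V) : sc 1 u = u. Proof. exact: scale1r. Qed.
Lemma sc0 (u : V) : sc 0 u = 0. Proof. exact: scale0r. Qed.
Lemma scD (a b : R) (u : V) : sc (a + b) u = sc a u + sc b u.
Proof. by rewrite /sc rmorphD scalerDl. Qed.
Lemma scA (a b : R) (u : V) : sc a (sc b u) = sc (a * b) u.
Proof. by rewrite /sc scalerA rmorphM. Qed.
Lemma scDr (a : R) (u v : V) : sc a (u + v) = sc a u + sc a v.
Proof. by rewrite /sc scalerDr. Qed.

Definition inC (x : V) := exists n (l : nat -> R),
  [/\ forall i, 0 <= l i, forall i, (n <= i)%N -> l i = 0,
      \sum_(i < n) l i = 1 & x = \sum_(i < n) sc (l i) (X i)].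

Lemma inC_A : inC A.
Proof.
exists 1%N, (fun i => (i == 0)%N%:R); split.
- by move=> i; rewrite ler0n.
- by case.
- by rewrite big_ord1.
- by rewrite big_ord1 /= sc1.
Qed.

Lemma inC_T x : inC x -> inC (T x).
Proof.
case=> n [l [l0 lz l1 ->]].
exists n.+1, (fun i => if i is k.+1 then l k else 0); split.
- by case.
- by case=> // k /= h; apply: lz.
- by rewrite big_ord_recl add0r -l1.
- rewrite [in RHS]big_ord_recl sc0 add0r (contr_sum c).
  apply: eq_bigr => i _ /=.
  by case: c => _ TZ _; rewrite TZ.
Qed.

Lemma inC_iter j x : inC x -> inC (iter j T x).
Proof. by move=> h; elim: j => //= j IH; apply: inC_T. Qed.

Lemma inC_mid x y : inC x -> inC y -> inC (sc (2^-1) (x + y)).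
Proof.
case=> n [l [l0 lz l1 ->]]; case=> n' [m [m0 mz m1 ->]].
exists (n + n')%N, (fun i => (l i + m i) / 2); split.
- by move=> i; rewrite divr_ge0 ?addr_ge0.
- move=> i h; rewrite lz ?mz ?addr0 ?mul0r //.
    exact: leq_trans (leq_addl _ _) h.
  exact: leq_trans (leq_addr _ _) h.
- rewrite -mulr_suml big_split /= (widen (n := n)) ?leq_addr //.
  rewrite (widen (n := n') (f := m)) ?leq_addl // l1 m1.
  by rewrite -[1 + 1]/(2%:R) divff // pnatr_eq0.
- transitivity (\sum_(i < n + n') sc 2^-1 (sc (l i) (X i) + sc (m i) (X i))); last first.
    by apply: eq_bigr => i _; rewrite scDr !scA -scD -mulrDr mulrC.
  rewrite /sc -scaler_sumr -/sc big_split /=.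
  congr (_ *: (_ + _)); symmetry.
    apply: (widen (f := fun i => sc (l i) (X i))); first exact: leq_addr.
    by move=> i h; rewrite lz // sc0.
  apply: (widen (f := fun i => sc (m i) (X i))); first exact: leq_addl.
  by move=> i h; rewrite mz // sc0.
Qed.

Lemma good d : 0 < d -> exists x, [/\ inC x,
  forall j, N x - N (iter j T x) <= d & forall j, N (iter j T x - x) <= 4 * d].
Proof.
move=> dp.
pose E := (fun y : R => exists x, inC x /\ y = N x) : set R.
have hinf : has_inf E.
  split; first by exists (N A), A; split => //; exact: inC_A.
  by exists 0 => y [x [_ ->]]; exact: (rN F x).
have [y0 [x [Cx ->]] hlt] := inf_adherent dp hinf.
have lb : forall x, inC x -> inf E <= N x.
  by move=> z Cz; apply: (ge_inf hinf.2); exists z.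
exists x; split => // j.
  by have := lb _ (inC_iter j Cx); lra.
set y := iter j T x.
have Ny : N y <= N x by case: (contr_iter c j) => _ _; apply.
rewrite (rBl F) !(rBr F) (rC F y x).
have := lb _ (inC_mid Cx (inC_iter j Cx)); rewrite -/y.
rewrite (rZ F) (rZr F) (rD F) !(rDr F) (rC F y x).
have := lb _ (inC_iter j Cx); rewrite -/y.
lra.
Qed.

Lemma iter_fix j : iter j T e = e.
Proof. by elim: j => //= j ->. Qed.

Lemma main_abs (eps : R) : 0 < eps -> exists n, (0 < n)%N /\
  forall M, exists k, (M <= k < M + n)%N /\ r e A - eps < r A (X k).
Proof.
move=> ep.
set Q := N A; set s := r e A.
have Q0 : 0 <= Q := rN F A.
pose eta := eps / 6.
have eta6 : eps = 6 * eta by rewrite /eta mulrC divfK // pnatr_eq0.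
have etap : 0 < eta by rewrite divr_gt0.
pose d := eta ^+ 2 / (4 * Q + 1).
have dp : 0 < d by rewrite divr_gt0 ?exprn_gt0 //; lra.
have hd : Q * (4 * d) <= eta ^+ 2.
  rewrite /d !mulrA ler_pdivrMr; last by lra.
  have := sqr_ge0 eta; nra.
have hd' : Q * d <= eta ^+ 2.
  have : 0 <= Q * d by rewrite mulr_ge0 // ltW.
  move: hd; rewrite mulrCA; lra.
have [x [Cx P1 P2]] := good dp.
case: (Cx) => L [l [l0 lz l1 xE]].
have NX : forall k, 0 <= N (X k) <= Q.
  move=> k; rewrite rN //=; by case: (contr_iter c k) => _ _; apply.
have fb : forall k, - Q <= r A (X k) <= Q.
  move=> k; have := CS F A (X k); have := NX k.
  move=> /andP [h1 h2] h3.
  have h4 : r A (X k) ^+ 2 <= Q ^+ 2 by apply: le_trans h3 _; rewrite expr2 ler_wpM2l.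
  by have [] := abs_sq Q0 h4 => -> ->.
have B2 : forall j, r A x - eta <= r A (iter j T x).
  move=> j; have := CS F A (iter j T x - x); rewrite (rBr F) => h.
  have h4 : (r A (iter j T x) - r A x) ^+ 2 <= eta ^+ 2.
    by apply: le_trans h _; apply: le_trans hd; rewrite ler_wpM2l.
  have [+ _] := abs_sq (ltW etap) h4; lra.
have B3 : N x <= r A x + 2 * eta.
  have e1 : N x = \sum_(i < L) l i * r (X i) x.
    by rewrite {1}xE (sum_rl F); apply: eq_bigr => i _; rewrite (rZ F).
  have each : forall i, r (X i) x <= r A x + 2 * eta.
    move=> i.
    have h1 := C1 F (contr_iter c i) A x.
    have h1' : (r A x - r (X i) (iter i T x)) ^+ 2 <= eta ^+ 2.
      apply: le_trans h1 _; apply: le_trans hd'.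
      have := NX i; have := P1 i; move=> /= p1 /andP [q1 q2].
      have p0 : 0 <= N x - N (iter i T x).
        by case: (contr_iter c i) => _ _ h; have := h x; lra.
      apply: ler_pM => //; rewrite -/Q; lra.
    have h2 := CS F (X i) (iter i T x - x); rewrite (rBr F) in h2.
    have h2' : (r (X i) (iter i T x) - r (X i) x) ^+ 2 <= eta ^+ 2.
      apply: le_trans h2 _; apply: le_trans hd.
      have := NX i; move=> /andP [q1 q2].
      apply: ler_pM => //; exact: rN.
    have [u1 _] := abs_sq (ltW etap) h1'.
    have [u2 _] := abs_sq (ltW etap) h2'.
    lra.
  rewrite e1; apply: le_trans (_ : \sum_(i < L) l i * (r A x + 2 * eta) <= _).
    by apply: ler_sum => i _; rewrite ler_wpM2l.
  by rewrite -mulr_suml l1 mul1r.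
have B4 : s <= N x.
  have re : forall i, r e (X i) = s.
    move=> i; have := C1 F (contr_iter c i) A e; rewrite iter_fix subrr mulr0.
    move=> h; have : r A e - r (X i) e = 0.
      by apply/eqP; rewrite -sqrf_eq0 eq_le h sqr_ge0.
    by rewrite /s (rC F e A) (rC F e (X i)); lra.
  have rex : r e x = s.
    rewrite xE (sum_rr F).
    under eq_bigr => i _ do rewrite (rZr F) re.
    by rewrite -mulr_suml l1 mul1r.
  have s0 : 0 <= s by rewrite /s -ree; exact: rN.
  have := CS F e x; rewrite rex ree -/s => h.
  have := rN F x; nra.
have B5 : forall j, s - 3 * eta <= r A (iter j T x).
  by move=> j; have := B2 j; lra.
pose n := (Num.Def.trunc (4 * L%:R * Q / eps)).+1.
have hn : 4 * L%:R * Q < n%:R * eps.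
  by rewrite -ltr_pdivrMr //; exact: truncnS_gt.
exists n; split => // M.
pose g k := r A (X (M + k)%N).
have Wsum : \sum_(k < n) r A (iter (M + k) T x) = \sum_(i < L) l i * \sum_(k < n) g (k + i)%N.
  under [RHS]eq_bigr => i _ do rewrite mulr_sumr.
  rewrite exchange_big /=; apply: eq_bigr => k _.
  rewrite xE (contr_sum (contr_iter c (M + k))) (sum_rr F); apply: eq_bigr => i _.
  case: (contr_iter c (M + k)) => _ IZ _; rewrite IZ (rZr F) -iterD /g addnA.
  done.
have lower : n%:R * (s - 3 * eta) <= \sum_(k < n) r A (iter (M + k) T x).
  apply: le_trans (_ : \sum_(k < n) (s - 3 * eta) <= _).
    by rewrite sumr_const card_ord mulr_natl.
  by apply: ler_sum => k _; apply: B5.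
have upper : \sum_(i < L) l i * \sum_(k < n) g (k + i)%N <= \sum_(k < n) g k + 2 * L%:R * Q.
  apply: le_trans (_ : \sum_(i < L) l i * (\sum_(k < n) g k + 2 * L%:R * Q) <= _); last first.
    by rewrite -mulr_suml l1 mul1r.
  apply: ler_sum => i _; rewrite ler_wpM2l //.
  apply: le_trans (tele (fun j => fb (M + j)%N) i n) _.
  rewrite lerD2l ler_wpM2r // ler_wpM2l // ler_nat; exact: ltnW.
case: (pickP (fun k : 'I_n => s - eps < g k)) => [k hk | none].
  exists (M + k)%N; split; last exact: hk.
  by rewrite leq_addr ltn_add2l ltn_ord.
have : \sum_(k < n) g k <= n%:R * (s - eps).
  apply: le_trans (_ : \sum_(k < n) (s - eps) <= _); last first.
    by rewrite sumr_const card_ord mulr_natl.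
  by apply: ler_sum => k _; have := none k; rewrite /= leNgt => ->.
move: hn lower upper; rewrite Wsum eta6; lra.
Qed.

End Main.

Lemma ReD (R : realType) (x y : R[i]) : complex.Re (x + y) = complex.Re x + complex.Re y.
Proof. by case: x => a b; case: y. Qed.
Lemma ReMr (R : realType) (s : R) (z : R[i]) : complex.Re ((s%:C)%C * z) = s * complex.Re z.
Proof. by case: z => a b /=; rewrite mul0r subr0. Qed.

Unset Implicit Arguments. Set Strict Implicit.

Theorem theorem4p1 (R : realType) (A : algType R[i]) (star : A -> A)
  (phi : A -> R[i]) (tau : A -> A) (a : A) (eps : R[i]) :
  star_dynamical_system star phi tau -> 0 < eps ->
  rel_dense_N (fun k : nat => (0 < k)%N /\
     `|phi a| ^+ 2 - eps < `|phi (star a * iter k tau a)|).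
Proof.
case=> [[stD stZ stM stK] [phil pos phi1] [taul tau1 tauN]] ep.
have phiD x y : phi (x + y) = phi x + phi y.
  by have := phil 1 x y; rewrite scale1r mul1r.
have phi0 : phi 0 = 0.
  by have h := phiD 0 0; rewrite addr0 in h; apply: (addrI (phi 0)); rewrite addr0 -h.
have phiZ (c : R[i]) x : phi (c *: x) = c * phi x.
  by have := phil c x 0; rewrite addr0 phi0 addr0.
have tauD x y : tau (x + y) = tau x + tau y.
  by have := taul 1 x y; rewrite !scale1r.
have tau0 : tau 0 = 0.
  by have h := tauD 0 0; rewrite addr0 in h; apply: (addrI (tau 0)); rewrite addr0 -h.
have tauZ (c : R[i]) x : tau (c *: x) = c *: tau x.
  by have := taul c x 0; rewrite addr0 tau0 addr0.
have star1 : star 1 = 1.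
  by have h := stM (star 1) 1; rewrite mulr1 !stK mulr1 in h.
pose r (u v : A) := complex.Re (phi (star u * v)).
have F : form r.
  split.
  - by move=> u v w; rewrite /r stD mulrDl phiD ReD.
  - move=> s u w; rewrite /r /sc stZ.
    have -> : Num.conj ((s%:C)%C : R[i]) = (s%:C)%C.
      apply/eqP; rewrite eq_complex /= oppr0 !eqxx. by [].
    by rewrite -scalerAl phiZ ReMr.
  - move=> u v; rewrite /r.
    have H := ger0_Im (pos (u + 'i%C *: v)).
    rewrite stD stZ mulrDl !mulrDr -!scalerAl -!scalerAr scalerA !phiD !phiZ in H.
    move: H (ger0_Im (pos u)) (ger0_Im (pos v)).
    case: (phi (star u * u)) => a1 a2; case: (phi (star u * v)) => p1 p2.
    case: (phi (star v * u)) => q1 q2; case: (phi (star v * v)) => b1 b2 /=.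
    lra.
  - by move=> u; rewrite /r; have := pos u; rewrite lecE => /andP [].
have c : contr r tau.
  split.
  - exact: tauD.
  - by move=> s u; rewrite /sc tauZ.
  - by move=> u; rewrite /r; have := tauN u; rewrite lecE => /andP [].
pose cc := phi a.
pose e : A := cc *: 1.
have Te : tau e = e by rewrite /e tauZ tau1.
have hs : r e a = complex.Re (Num.conj cc * cc).
  by rewrite /r /e stZ star1 -scalerAl mul1r phiZ.
have ree : r e e = r e a.
  rewrite hs /r /e stZ star1 -scalerAl mul1r !phiZ phi1 mulr1.
  by [].
have epR : eps = ((complex.Re eps)%:C)%C.
  by move: ep; rewrite ltcE; case: eps => x y /= /andP [/eqP -> _].
have ep' : 0 < complex.Re eps by move: ep; rewrite ltcE => /andP [].
have [n [n0 Hn]] := main_abs F c Te ree ep'.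
exists n; split => // j j0.
have [k [hk hlt]] := Hn j.
exists k; split => //; split.
  by case/andP: hk => h _; exact: leq_trans j0 h.
have nc : `|phi a| ^+ 2 = ((r e a)%:C)%C.
  rewrite sqr_normc hs /cc; case: (phi a) => x y /=.
  by apply/eqP; rewrite eq_complex /=; apply/andP; split; apply/eqP; ring.
rewrite nc {1}epR -rmorphB.
apply: lt_le_trans (normc_ge_Re _).
rewrite ltcR; apply: lt_le_trans hlt _; exact: ler_norm.
Qed.
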